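(* Let $n \ge 1$ be an integer and let $A_n \in \{0,1\}^{[2]^n \times [2]^n}$ be the binary single-grain-error channel: for $x,y \in [2]^n$ (indexed $x = x_0x_1\cdots x_{n-1}$), $(A_n)_{x,y}=1$ if and only if either $y = x$, or there exists $j \in \{0,\dots,n-2\}$ such that $y_j = x_{j+1}$ and $y_i = x_i$ for all $i \ne j$. For $y \in [2]^n$ let $r_y$ be the number of runs of $y$, $u_y$ the number of runs of length one, $b^L_y \in \{0,1\}$ the indicator that the first run of $y$ has length one, and $b^R_y \in\{0,1\}$ the indicator that the last run of $y$ has length one. Then the vector $z \in \mathbb{R}^{[2]^n}$ with \[ z_y = \frac{1}{r_y}\left(1 + \frac{2u_y - 2b^R_y - b^L_y - 2}{(r_y+2)(r_y+1)}\right)^{-1} \] is feasible for $\kappa^*(A_n)$, i.e. $z \ge \mathbf{0}$ and $A_n z \ge \mathbf{1}$ entrywise.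
   Context: $[2]=\{0,1\}$; a run of a string is a maximal block of consecutive equal symbols. For $A \in \{0,1\}^{X\times Y}$, $\kappa^*(A) = \min\{\mathbf{1}^T z : z\in\mathbb{R}^Y,\ z \ge \mathbf{0},\ Az \ge \mathbf{1}\}$ (entrywise inequalities). *)

(* Defs.v *)
From mathcomp Require Import all_boot all_order all_algebra.
Set Implicit Arguments. Unset Strict Implicit. Unset Printing Implicit Defensive.
Import Order.TTheory GRing.Theory Num.Theory.

(* Run lengths of a binary string, left to right.
   rl_aux b k s : current run has symbol b and length k so far, s remains. *)
Fixpoint rl_aux (b : bool) (k : nat) (s : seq bool) : seq nat :=
  match s with
  | [::] => [:: k]
  | c :: s' => if c == b then rl_aux b k.+1 s' else k :: rl_aux c 1 s'
  end.

Definition run_lengths (s : seq bool) : seq nat :=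
  match s with [::] => [::] | b :: s' => rl_aux b 1 s' end.

Definition nruns (s : seq bool) : nat := size (run_lengths s).
Definition nsingle_runs (s : seq bool) : nat := count (pred1 1%N) (run_lengths s).
Definition bL (s : seq bool) : nat := (head 0%N (run_lengths s) == 1%N).
Definition bR (s : seq bool) : nat := (last 0%N (run_lengths s) == 1%N).

Definition grain_channel (n : nat) (x y : n.-tuple bool) : bool :=
  (y == x) ||
  [exists j : 'I_n, (j.+1 < n)%N &&
     [&& [exists i : 'I_n, (val i == j.+1) && (tnth y j == tnth x i)] &
         [forall i : 'I_n, (i != j) ==> (tnth y i == tnth x i)]]].

Definition kappa_feasible (R : numDomainType) (X Y : finType)
    (A : X -> Y -> bool) (z : Y -> R) : Prop :=
  (forall y, 0 <= z y)%R /\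
  (forall x, 1 <= \sum_(y : Y) (A x y)%:R * z y)%R.

(* Main.v *)
Require Import Defs.
From mathcomp Require Import all_boot all_order all_algebra.
From mathcomp Require Import zify ring lra.
Import Order.TTheory GRing.Theory Num.Theory.

Lemma rl_nonnil b k s : exists R0 l, rl_aux b k s = rcons R0 l.
Proof.
elim: s b k => [|c s IH] b k /=; first by exists [::], k.
case: eqP => _; first exact: IH.
have [R0 [l ->]] := IH c 1. by exists (k :: R0), l.
Qed.

Lemma rl_cat b k s1 : exists R0 l, rl_aux b k s1 = rcons R0 l /\
  forall s2, rl_aux b k (s1 ++ s2) = R0 ++ rl_aux (last b s1) l s2.
Proof.
elim: s1 b k => [|c s1 IH] b k /=; first by exists [::], k.
case: eqP => [->|_]; first exact: IH.
have [R0 [l [-> H]]] := IH c 1. exists (k :: R0), l; split=> // s2.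
by rewrite H.
Qed.

Definition inch (R : seq nat) := if R is h :: T then h.+1 :: T else R.

Lemma rl_inc b k s : rl_aux b k.+1 s = inch (rl_aux b k s).
Proof.
elim: s b k => [|c s IH] b k //=.
by case: eqP => _ //; rewrite IH.
Qed.

Lemma rl_pos b k s : 0 < k -> all (leq 1) (rl_aux b k s).
Proof.
elim: s b k => [|c s IH] b k /= hk; first by rewrite andbT.
case: eqP => _; first exact: IH.
by apply/andP; split; [|apply: IH].
Qed.

Lemma rl_head b s : exists m B, rl_aux b 1 s = m :: B /\ 0 < m /\
   forall k, rl_aux b k.+1 s = (m + k) :: B.
Proof.
case: (rl_nonnil b 1 s) => R0 [l E].
have hp := @rl_pos b 1 s (ltnSn 0). rewrite E in hp.
case: R0 E hp => [|m B] E hp.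
  exists l, [::]; split=> //; split; first by move: hp => /= /andP[].
  elim=> [|k IHk]; first by rewrite addn0 E.
  by rewrite rl_inc IHk addnS.
exists m, (rcons B l); split=> //; split; first by move: hp => /= /andP[].
elim=> [|k IHk]; first by rewrite addn0 E.
by rewrite rl_inc IHk addnS.
Qed.

Lemma bstats s j : j.+1 < size s -> nth false s j != nth false s j.+1 ->
  let y := set_nth false s j (nth false s j.+1) in
  [/\ j = 0 -> nruns y + 1 = nruns s /\
        2 * nsingle_runs y + 2 * bR s + bL s + 1 <= 2 * nsingle_runs s + 2 * bR y + bL y,
      0 < j -> nth false s j.-1 = nth false s j -> nruns y = nruns s /\
        2 * nsingle_runs y + 2 * bR s + bL s <= 2 * nsingle_runs s + 2 * bR y + bL y + 2 &
      0 < j -> nth false s j.-1 != nth false s j -> nruns y + 2 = nruns s /\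
        2 * nsingle_runs y + 2 * bR s + bL s + 2 <= 2 * nsingle_runs s + 2 * bR y + bL y].
Proof.
move=> hj hab y.
set a := nth false s j in hab y *. set b := nth false s j.+1 in hab y *.
set q := drop j.+2 s.
have hj0 : j < size s by apply: ltnW.
have Es : s = take j s ++ a :: b :: q.
  by rewrite -{1}(cat_take_drop j s) (drop_nth false hj0) (drop_nth false hj).
have Ey : y = take j s ++ b :: b :: q.
  by rewrite /y set_nthE hj0 (drop_nth false hj).
have hsz : size (take j s) = j by rewrite size_take hj0.
have [m [B [EM [hm Hk]]]] := rl_head b q.
have hba : (b == a) = false by apply/negbTE; rewrite eq_sym.
have hab' : (a == b) = false by apply/negbTE.
rewrite /nruns /nsingle_runs /bR /bL.
case Ep: (take j s) hsz Es Ey => [|h p] hsz Es Ey.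
  rewrite Es Ey /= hba eqxx EM Hk /=.
  subst j; split=> // _.
  case: B {EM Hk} => [|b0 B] /=; lia.
rewrite -hsz /= in Es Ey *.
have Elast : nth false s (size p) = last h p.
  by rewrite Es -cat_cons nth_cat /= ltnSn (nth_last false (h :: p)).
rewrite Elast.
have [R0 [l [E1 E2]]] := rl_cat h 1 p.
rewrite Es Ey /= !E2.
have hl : 0 < l.
  by have := @rl_pos h 1 p (ltnSn 0); rewrite E1 all_rcons => /andP[].
have [->|hne] := eqVneq (last h p) a.
  rewrite /= ?eqxx ?hba EM Hk ?eqxx /=.
  split; [by [] | move=> _ _ | by []].
  rewrite !size_cat !count_cat /= !last_cat /=.
  case: R0 {E1 E2} => [|r0 R0] /=; case: B {EM Hk} => [|b0 B] /=; lia.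
have -> : last h p = b.
  move: (last h p) hne hab; rewrite /a /b.
  by case: (nth false s j); case: (nth false s j.+1); case.
rewrite /= ?eqxx ?hab' ?hba EM ?Hk ?eqxx ?hab' /=.
split; [by [] | by move=> _ e; move: hab; rewrite e eqxx | move=> _ _].
rewrite !size_cat !count_cat /= !last_cat /=.
case: R0 {E1 E2} => [|r0 R0] /=; case: B {EM Hk} => [|b0 B] /=; lia.
Qed.

Definition bnd (w : seq bool) j := nth false w j != nth false w j.+1.
Definition isok k (w : seq bool) j :=
  if j == 0 then k == 1 else nth false w j.-1 != nth false w j.

Lemma rl_size b k s :
  size (rl_aux b k s) = 1 + \sum_(0 <= j < size s) bnd (b :: s) j.
Proof.
elim: s b k => [|c s IH] b k; first by rewrite big_geq.
rewrite /= big_nat_recl //=.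
rewrite /bnd /=.
case: eqP => [->|hcb]; first by rewrite eqxx IH.
rewrite /= IH.
have -> : (b != c) = true by apply/eqP => e; apply: hcb.
by rewrite add1n.
Qed.

Lemma rl_count b k s : 0 < k ->
  count (pred1 1) (rl_aux b k s) = (last 0 (rl_aux b k s) == 1) +
     \sum_(0 <= j < size s) (bnd (b :: s) j && isok k (b :: s) j).
Proof.
elim: s b k => [|c s IH] b k hk; first by rewrite big_geq //= addn0.
rewrite /= big_nat_recl //=.
case: eqP => [->|hcb].
  rewrite IH //; rewrite /bnd /= eqxx /= add0n; congr (_ + _).
  apply: eq_bigr => i _; rewrite /isok /=; case: i => [|i] //=.
  by rewrite eqxx /=; case: k hk.
have [R0 [l E]] := rl_nonnil c 1 s.
rewrite /= IH // E last_rcons.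
rewrite -E.
have hbc : (b != c) = true by apply/eqP => e; apply: hcb.
rewrite /bnd /isok /= hbc /=.
rewrite addnA [(k == 1) + _]addnC -addnA; congr (_ + (_ + _)).
  by rewrite E /= last_rcons.
apply: eq_bigr => i _; case: i => [|i] //=.
by rewrite hbc.
Qed.

Section Sec_L3.
Local Open Scope ring_scope.


Definition zf {R : realFieldType} (r : nat) (c : R) :=
  ((r%:R : R)^-1 * (1 + c / ((r + 2)%N%:R * (r + 1)%N%:R))^-1).
Definition gf {R : realFieldType} (r : nat) (e : R) :=
  (r%:R : R)^-1 - e / (r%:R * ((r + 2)%N%:R * (r + 1)%N%:R)).

Lemma zf_eq (R : realFieldType) (r : nat) (c : R) : (0 < r)%N -> -5 <= c ->
  zf r c = ((r%:R + 2) * (r%:R + 1)) / (r%:R * ((r%:R + 2) * (r%:R + 1) + c)).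
Proof.
move=> hr hc; rewrite /zf !natrD.
have hx : 1 <= (r%:R : R) by rewrite ler1n.
have hD : (r%:R + 2) * (r%:R + 1) + c != 0 :> R by apply/lt0r_neq0; nra.
have hD2 : (r%:R + 2) * (r%:R + 1) != 0 :> R by apply/lt0r_neq0; nra.
have hx0 : (r%:R : R) != 0 by apply/lt0r_neq0; lra.
have h1 : (r%:R : R) + 1 != 0 by apply/lt0r_neq0; lra.
have h2 : (r%:R : R) + 2 != 0 by apply/lt0r_neq0; lra.
field.
by rewrite ?hD ?hx0 ?h1 ?h2 ?hD2.
Qed.

Lemma gf_eq (R : realFieldType) (r : nat) (e : R) : (0 < r)%N ->
  gf r e = ((r%:R + 2) * (r%:R + 1) - e) / (r%:R * ((r%:R + 2) * (r%:R + 1))).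
Proof.
move=> hr; rewrite /gf !natrD.
have hx : 1 <= (r%:R : R) by rewrite ler1n.
have hD2 : (r%:R + 2) * (r%:R + 1) != 0 :> R by apply/lt0r_neq0; nra.
have hx0 : (r%:R : R) != 0 by apply/lt0r_neq0; lra.
have h1 : (r%:R : R) + 1 != 0 by apply/lt0r_neq0; lra.
have h2 : (r%:R : R) + 2 != 0 by apply/lt0r_neq0; lra.
field.
by rewrite ?hx0 ?h1 ?h2 ?hD2.
Qed.

Lemma gf_mono (R : realFieldType) (r : nat) (e e' : R) : (0 < r)%N -> e <= e' -> gf r e' <= gf r e.
Proof.
move=> hr he; rewrite /gf lerD2l lerN2 ler_pM2r //.
rewrite invr_gt0 !natrD; have hx : 1 <= (r%:R : R) by rewrite ler1n.
nra.
Qed.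

Lemma key_ineq (R : realFieldType) (x D c Dr r e : R) : 0 < x -> 0 < D + c -> 0 < r -> 0 < Dr ->
  (Dr - e) * (x * (D + c)) <= D * (r * Dr) ->
  (Dr - e) / (r * Dr) <= D / (x * (D + c)).
Proof.
move=> hx hDc hr hDr h.
by rewrite ler_pdivlMr ?mulr_gt0 // mulrAC ler_pdivrMr ?mulr_gt0 // -mulrA.
Qed.

Lemma T0 (R : realFieldType) (r : nat) (c : R) : (0 < r)%N -> -5 <= c -> gf r c <= zf r c.
Proof.
move=> hr hc; rewrite zf_eq // gf_eq //.
have hx : 1 <= (r%:R : R) by rewrite ler1n.
apply: key_ineq; nra.
Qed.

Lemma T1 (R : realFieldType) (r : nat) (c : R) : (0 < r)%N -> -5 <= c -> c <= 2 * r%:R - 4 ->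
  gf r.+1 (c - r.+1%:R - 1) <= zf r c.
Proof.
move=> hr hc1 hc2; rewrite zf_eq // gf_eq // -addn1 natrD.
have hx : 1 <= (r%:R : R) by rewrite ler1n.
apply: key_ineq; try nra.
set x := (r%:R : R).
have h1 := sqr_ge0 (2 * c - 3 * x - 6).
have h2 : 0 <= x * (2 * c - 3 * x - 6) ^+ 2 by apply: mulr_ge0; lra.
have h3 : 0 <= x * x * x by apply: mulr_ge0; nra.
nra.
Qed.

Lemma T2 (R : realFieldType) (r : nat) (c : R) : (0 < r)%N -> -5 <= c -> c <= 2 * r%:R - 4 ->
  gf r.+2 (c - 2 * r.+2%:R - 2) <= zf r c.
Proof.
move=> hr hc1 hc2; rewrite zf_eq // gf_eq // -addn2 natrD.
have hx : 1 <= (r%:R : R) by rewrite ler1n.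
apply: key_ineq; try nra.
set x := (r%:R : R).
set t := 2 * x - 4 - c.
have ht : 0 <= t by rewrite /t; lra.
have h1 : 0 <= x * t ^+ 2 by apply: mulr_ge0; nra.
have h2 : 0 <= x * x * t by apply: mulr_ge0; nra.
have h3 : 0 <= x * t by apply: mulr_ge0; nra.
have h4 : 0 <= x * x by nra.
have -> : c = 2 * x - 4 - t by rewrite /t; ring.
nra.
Qed.


End Sec_L3.

Lemma rl_gen (s : seq bool) : (0 < size s)%N ->
  (0 < nruns s)%N /\ (nsingle_runs s + 1 <= nruns s + bR s)%N.
Proof.
case: s => [|b s] //= _.
rewrite /nruns /nsingle_runs /bR /=.
have [R0 [l ->]] := rl_nonnil b 1 s.
rewrite size_rcons last_rcons -cats1 count_cat /= addn0; split=> //.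
by rewrite addn1 addSn ltnS leq_add2r count_size.
Qed.

Definition cx {R : realFieldType} (s : seq bool) : R :=
  (2 * (nsingle_runs s)%:R - 2 * (bR s)%:R - (bL s)%:R - 2)%R.

Lemma cx_range (R : realFieldType) (s : seq bool) : (0 < size s)%N ->
  (-5 <= cx s :> R)%R /\ (cx s <= 2 * (nruns s)%:R - 4 :> R)%R.
Proof.
move=> hs; have [h1 h2] := rl_gen s hs.
have hb1 : (bR s <= 1)%N by rewrite /bR leq_b1.
have hb2 : (bL s <= 1)%N by rewrite /bL leq_b1.
move: h2 hb1 hb2; rewrite -!(ler_nat R) !natrD /cx => h2 hb1 hb2.
have h0 : (0 <= (nsingle_runs s)%:R :> R)%R by apply: ler0n.
have h3 : (0 <= (bR s)%:R :> R)%R by apply: ler0n.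
have h4 : (0 <= (bL s)%:R :> R)%R by apply: ler0n.
split; lra.
Qed.

Section Sec_M2.
Local Open Scope ring_scope.

Lemma gfE (R : realFieldType) (r : nat) (e : R) :
  gf r e = r%:R^-1 - e * (r%:R * ((r + 2)%N%:R * (r + 1)%N%:R))^-1.
Proof. by []. Qed.

Lemma Ybound (R : realFieldType) (s : seq bool) (j : nat) :
  (j.+1 < size s)%N -> bnd s j ->
  let y := set_nth false s j (nth false s j.+1) in
  let r := nruns s in
  let K := ((r%:R * ((r + 2)%N%:R * (r + 1)%N%:R))^-1 : R) in
  r%:R^-1 - (cx s + 2) * K + (j == 0)%:R * ((r%:R + 4) * K)
    + ((j != 0) && (nth false s j.-1 != nth false s j))%:R * ((2 * r%:R + 6) * K)
  <= zf (nruns y) (cx y).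
Proof.
move=> hj hb /=.
set y := set_nth false s j (nth false s j.+1).
set r := nruns s.
set K := ((r%:R * ((r + 2)%N%:R * (r + 1)%N%:R))^-1 : R).
have [H0 H1 H2] := @bstats s j hj hb; rewrite -/y in H0 H1 H2.
have hsy : size y = size s.
  by rewrite /y size_set_nth; apply/maxn_idPr; apply: ltnW.
have hs : (0 < size s)%N by apply: leq_ltn_trans hj.
have hys : (0 < size y)%N by rewrite hsy.
have [hr' _] := rl_gen y hys.
have [hr _] := rl_gen s hs.
have [cy1 cy2] := cx_range R y hys.
have [cs1 cs2] := cx_range R s hs.
have hK : 0 <= K.
  rewrite /K invr_ge0; apply: mulr_ge0; first exact: ler0n.
  by apply: mulr_ge0; apply: ler0n.
have gfK : forall e, gf r e = r%:R^-1 - e * K by move=> e; rewrite gfE.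
have [hj0|hj0] := eqVneq j 0.
  have [E1 E2] := H0 hj0.
  move: E2; rewrite -(ler_nat R) !natrD => E2.
  have hcy : cx y <= cx s - 1 :> R by rewrite /cx; lra.
  rewrite hj0 eqxx /= mul0r addr0 mul1r.
  have T := @T1 R _ _ hr' cy1 cy2.
  have er : (nruns y).+1 = r by rewrite /r -E1 addn1.
  rewrite er in T.
  apply: (le_trans _ T).
  have hrr : (r%:R : R) = (nruns y)%:R + 1 by rewrite -er -addn1 natrD.
  have hm : cx y - r%:R - 1 <= cx s - r%:R - 2 :> R by lra.
  apply: (le_trans _ (@gf_mono R r _ _ hr hm)).
  by rewrite gfK le_eqVlt; apply/orP; left; apply/eqP; ring.
have hjp : (0 < j)%N by rewrite lt0n.
rewrite /= ?mul0r ?addr0.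
have [hiso|hiso] := eqVneq (nth false s j.-1) (nth false s j).
  have [E1 E2] := H1 hjp hiso.
  move: E2; rewrite -(ler_nat R) !natrD => E2.
  have hcy : cx y <= cx s + 2 :> R by rewrite /cx; lra.
  rewrite /= mul0r addr0.
  apply: (le_trans _ (@T0 R _ _ hr' cy1)); rewrite E1 -/r.
  by rewrite -gfK; apply: gf_mono => //; rewrite -E1.
have [E1 E2] := H2 hjp hiso.
move: E2; rewrite -(ler_nat R) !natrD => E2.
have hcy : cx y <= cx s - 2 :> R by rewrite /cx; lra.
rewrite /= mul1r.
have T := @T2 R _ _ hr' cy1 cy2.
have er : (nruns y).+2 = r by rewrite /r -E1 addn2.
rewrite er in T.
apply: (le_trans _ T).
have hrr : (r%:R : R) = (nruns y)%:R + 2 by rewrite -er -addn2 natrD addrC.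
have hm : cx y - 2 * r%:R - 2 <= cx s - 2 * r%:R - 4 :> R by lra.
apply: (le_trans _ (@gf_mono R r _ _ hr hm)).
by rewrite gfK le_eqVlt; apply/orP; left; apply/eqP; ring.
Qed.

End Sec_M2.

Lemma cnt_facts (s : seq bool) : (0 < size s)%N ->
  [/\ nruns s = 1 + \sum_(0 <= j < (size s).-1) bnd s j,
      nsingle_runs s = bR s + \sum_(0 <= j < (size s).-1) (bnd s j && isok 1 s j),
      \sum_(0 <= j < (size s).-1) (bnd s j && isok 1 s j) =
        \sum_(0 <= j < (size s).-1) (bnd s j && (j == 0)) +
        \sum_(0 <= j < (size s).-1) (bnd s j && (j != 0) && (nth false s j.-1 != nth false s j)) &
      \sum_(0 <= j < (size s).-1) (bnd s j && (j == 0)) <= bL s]%N.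
Proof.
case: s => [|b s] //= _.
split.
- by rewrite /nruns /= rl_size.
- by rewrite /nsingle_runs /bR /= rl_count.
- rewrite -big_split /=; apply: eq_bigr => j _.
  by rewrite /isok; case: j => [|j] //=; case: (bnd _ _).
case: s => [|c t]; first by rewrite big_geq.
rewrite /= big_nat_recl //= big1 ?addn0; last by move=> i _; rewrite andbF.
rewrite /bnd /= andbT /bL /=.
case: (c =P b) => [->|hcb] /=; first by rewrite eqxx.
by case: (b != c).

Qed.

Lemma sum_sub (R : realFieldType) (T : finType) (P : pred T) (F : T -> R) (S : seq T) :
  uniq S -> all P S -> (forall y, (0 <= F y)%R) ->
  (\sum_(y <- S) F y <= \sum_y (P y)%:R * F y)%R.
Proof.
move=> uS aP F0; rewrite big_uniq // big_mkcond /=.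
apply: ler_sum => y _.
case: (boolP (y \in S)) => hy.
  by rewrite (allP aP y hy) mul1r.
by rewrite mulr_ge0 // ler0n.
Qed.

Theorem theorem3 (R : realFieldType) (n : nat) (hn : (1 <= n)%N) :
  kappa_feasible (@grain_channel n)
    (fun y : n.-tuple bool =>
       let r := nruns y in
       ((r%:R : R)^-1 *
        (1 + ((2 * (nsingle_runs y)%:R - 2 * (bR y)%:R - (bL y)%:R - 2)
              / ((r + 2)%N%:R * (r + 1)%N%:R)))^-1)%R).
Proof.
have Fnn : forall y : n.-tuple bool, (0 <= zf (nruns y) (@cx R y))%R.
  move=> y.
  have hs : (0 < size y)%N by rewrite size_tuple.
  have [hr _] := rl_gen y hs.
  have [c1 _] := cx_range R y hs.
  rewrite zf_eq //.
  have hx : (1 <= (nruns y)%:R :> R)%R by rewrite ler1n.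
  apply: divr_ge0; first nra.
  apply: mulr_ge0; nra.
split; first exact: Fnn.
move=> x.
change (1 <= \sum_y (grain_channel x y)%:R * zf (nruns y) (@cx R y))%R.
set s := tval x.
have hsz : size s = n by rewrite size_tuple.
have hs : (0 < size s)%N by rewrite hsz.
pose Ys j := set_nth false s j (nth false s j.+1).
pose Y j : n.-tuple bool := insubd x (Ys j).
have hY : forall j, (j.+1 < n)%N -> tval (Y j) = Ys j.
  move=> j hj; rewrite /Y insubdK //.
  by rewrite unfold_in /Ys size_set_nth hsz; apply/eqP/maxn_idPr; apply: ltnW.
pose J := [seq j <- iota 0 n.-1 | bnd s j].
have hJ : forall j, j \in J -> (j.+1 < n)%N /\ bnd s j.
  move=> j; rewrite mem_filter mem_iota add0n => /andP[hb hj].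
  by split=> //; rewrite -(prednK hn) ltnS.
have nthY : forall j i, (j.+1 < n)%N -> nth false (Y j) i = (if i == j then nth false s j.+1 else nth false s i).
  by move=> j i hj; rewrite hY // /Ys nth_set_nth.
have stepA : (zf (nruns x) (@cx R x) + \sum_(j <- J) zf (nruns (Y j)) (@cx R (Y j))
      <= \sum_y (grain_channel x y)%:R * zf (nruns y) (@cx R y))%R.
  apply: (le_trans _ (@sum_sub R _ (grain_channel x) (fun y => zf (nruns y) (@cx R y)) (x :: map Y J) _ _ Fnn)).
  - by rewrite big_cons big_map.
  - rewrite /= map_inj_in_uniq ?filter_uniq ?iota_uniq ?andbT //.
      apply/mapP => -[j hjJ hxY].
      have [hj hb] := hJ j hjJ.
      have := nthY j j hj; rewrite -hxY eqxx => e.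
      by move: hb; rewrite /bnd -e eqxx.
    move=> j k hjJ hkJ hYjk.
    have [hj hb] := hJ j hjJ; have [hk _] := hJ k hkJ.
    apply/eqP; apply: contraTT hb => hjk.
    have := nthY j j hj; rewrite hYjk nthY // (negbTE hjk) eqxx => e.
    by rewrite /bnd e eqxx.
  - rewrite /=; apply/andP; split; first by rewrite /grain_channel eqxx.
    apply/allP => y /mapP [j hjJ ->].
    have [hj hb] := hJ j hjJ.
    have hj0 : (j < n)%N by apply: ltnW.
    apply/orP; right; apply/existsP; exists (Ordinal hj0); rewrite /= hj /=.
    apply/andP; split.
      apply/existsP; exists (Ordinal hj); rewrite /= eqxx /=.
      by rewrite !(tnth_nth false) /= nthY // eqxx.
    apply/forallP => i; apply/implyP => hi.
    rewrite !(tnth_nth false) nthY //.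
    have -> : (val i == j) = false by apply/negbTE; move: hi; apply: contra => /eqP e; apply/eqP/val_inj.
    by [].
apply: (le_trans _ stepA).
have hiota : iota 0 n.-1 = index_iota 0 n.-1 by rewrite /index_iota subn0.
rewrite /J big_filter hiota.
set r := nruns s.
set K := ((r%:R * ((r + 2)%N%:R * (r + 1)%N%:R))^-1 : R)%R.
have [hB hU hsplit hS0] := cnt_facts s hs.
rewrite hsz in hB hU hsplit hS0.
have [hr _] := rl_gen s hs.
have [cs1 _] := cx_range R s hs.
have stepB : (\sum_(0 <= j < n.-1)
     ((bnd s j)%:R * (r%:R^-1 - (@cx R s + 2) * K)
      + (bnd s j && (j == 0))%:R * ((r%:R + 4) * K)
      + (bnd s j && (j != 0) && (nth false s j.-1 != nth false s j))%:R * ((2 * r%:R + 6) * K))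
   <= \sum_(0 <= j < n.-1 | bnd s j) zf (nruns (Y j)) (@cx R (Y j)))%R.
  rewrite [X in (_ <= X)%R]big_mkcond /=; apply: ler_sum_nat => j /andP[_ hj].
  have hj1 : (j.+1 < n)%N by rewrite -(prednK hn) ltnS.
  case: (boolP (bnd s j)) => hb.
    rewrite mul1r /= hY //.
    have := @Ybound R s j ltac:(by rewrite hsz) hb.
    by rewrite -/r -/K /=; apply.
  by rewrite /= mul0r !mul0r !addr0.
apply: (le_trans _ (lerD (@T0 R _ _ hr cs1) stepB)).
rewrite !big_split /= -!mulr_suml -!natr_sum.
rewrite hsplit in hU.
set B := \sum_(0 <= i < n.-1) bnd s i in hB *.
set S0 := \sum_(0 <= i < n.-1) (bnd s i && (i == 0)) in hU hS0 *.
set M := \sum_(0 <= i < n.-1) (bnd s i && (i != 0) && (nth false s i.-1 != nth false s i)) in hU *.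
rewrite gfE -/r -/K.
have hx : (r%:R = 1 + B%:R :> R)%R by rewrite /r hB natrD.
have hcx : (@cx R s = 2 * (S0%:R + M%:R) - (bL s)%:R - 2)%R.
  by rewrite /cx hU !natrD; ring.
have hS0R : (S0%:R <= (bL s)%:R :> R)%R by rewrite ler_nat.
have hK : (0 <= K)%R.
  rewrite /K invr_ge0; apply: mulr_ge0; first exact: ler0n.
  by apply: mulr_ge0; apply: ler0n.
have hx0 : (r%:R != 0 :> R)%R by rewrite pnatr_eq0 -lt0n.
set E := (- @cx R s - B%:R * (@cx R s + 2) + S0%:R * (r%:R + 4) + M%:R * (2 * r%:R + 6))%R.
have -> : (r%:R^-1 - @cx R s * K + (B%:R * (r%:R^-1 - (@cx R s + 2) * K) +
     S0%:R * ((r%:R + 4) * K) + M%:R * ((2 * r%:R + 6) * K)) =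
     (1 + B%:R) * r%:R^-1 + K * E)%R by rewrite /E; ring.
rewrite -hx mulfV // lerDl; apply: mulr_ge0 => //.
rewrite /E hcx hx.
have hB0 : (0 <= B%:R :> R)%R by apply: ler0n.
have hM0 : (0 <= M%:R :> R)%R by apply: ler0n.
have hS00 : (0 <= S0%:R :> R)%R by apply: ler0n.
have hbL0 : (0 <= (bL s)%:R :> R)%R by apply: ler0n.
nra.
Qed.
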